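(* Let $f\in K[x]$, $Q<R$ in $\mathcal Q$ and $d=\deg_Qf$. Then $\nu(f_{Q,d}-f_{R,d})>\nu(f_{Q,d})$ (in particular $\nu(f_{Q,d})=\nu(f_{R,d})$), $d=\max\{j:\nu_Q(f_{R,j}R^j)=\nu_Q(f)\}$, and $\deg_Rf\le d$.
   Context: Let $(K,v)$ be a valued field, $\Gamma$ the divisible hull of $vK$, embedded in a divisible ordered abelian group $\Lambda$. Let $\nu\colon K[x]\to\Lambda\cup\{\infty\}$ be a valuation extending $v$ which is well-specified, i.e. it is not the case that simultaneously $\nu^{-1}(\infty)=0$, the value group of $\nu$ modulo $\Gamma$ is torsion, and the residue field of $\nu$ is algebraic over that of $v$. For $s\ge0$ let $\partial_s$ be the $s$-th Hasse–Schmidt derivative, defined by $f(x+y)=\sum_{s\ge0}(\partial_sf)y^s$. For nonconstant $f$ with $\nu(f)<\infty$ the level is $\epsilon_\nu(f)=\max\{(\nu(f)-\nu(\partial_sf))/s: s\ge1\}$; $\epsilon_\nu(a)=-\infty$ for $a\in K$. A monic $Q\in K[x]$ is a key polynomial for $\nu$ if $\epsilon_\nu(f)<\epsilon_\nu(Q)$ whenever $\deg f<\deg Q$. For monic $Q$, each $f$ has a unique $Q$-expansion $f=\sum_{i\ge0}f_{Q,i}Q^i$ with $\deg f_{Q,i}<\deg Q$; set $\nu_Q(f)=\min_i\nu(f_{Q,i}Q^i)$ (a valuation with $\nu_Q\le\nu$ for key polynomials $Q$), $S_Q(f)=\{i:\nu(f_{Q,i}Q^i)=\nu_Q(f)\}$,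 $\deg_Qf=\max S_Q(f)$. Fix $m\ge1$ such that the set $\Psi_m$ of key polynomials of degree $m$ for $\nu$ is nonempty and has no element of maximal $\nu$-value. Let $\mathcal Q\subseteq\Psi_m$ be well-ordered by $Q<R\iff\nu(Q)<\nu(R)$ and cofinal in $\Psi_m$ for $\nu$-values. As in the paper, all values $\nu_Q(f)$ ($f\ne0$) lie in $\Gamma$. *)

(* Defs.v *)
From HB Require Import structures.
From mathcomp Require Import all_boot all_order all_algebra.
Set Implicit Arguments. Unset Strict Implicit. Unset Printing Implicit Defensive.
Import Order.TTheory GRing.Theory Num.Theory.
Local Open Scope ring_scope.

Record divisible_oag (L : porderZmodType) : Prop := {
  doag_total : forall x y : L, (x <= y) || (y <= x);
  doag_addr  : forall x y z : L, x <= y -> x + z <= y + z;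
  doag_div   : forall (x : L) (n : nat), (0 < n)%N -> exists y : L, y *+ n = x
}.

(* Lambda \cup {oo} : None stands for oo. *)
Definition vinf (L : porderZmodType) := option L.

Section Vinf.
Variable L : porderZmodType.

Definition vle (a b : vinf L) : bool :=
  match a, b with
  | _, None => true
  | None, Some _ => false
  | Some x, Some y => x <= y
  end.

Definition vlt (a b : vinf L) : bool :=
  match a, b with
  | Some x, Some y => x < y
  | Some _, None => true
  | None, _ => false
  end.

Definition vadd (a b : vinf L) : vinf L :=
  match a, b with
  | Some x, Some y => Some (x + y)
  | _, _ => None
  end.

Definition vmin (a b : vinf L) : vinf L := if vle a b then a else b.
End Vinf.

Section Valuations.
Variables (K : fieldType) (L : porderZmodType).

Definition is_field_valuation (v : K -> vinf L) : Prop :=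
  [/\ forall a, v a = None <-> a = 0,
      v 1 = Some 0,
      forall a b, v (a * b) = vadd (v a) (v b)
    & forall a b, vle (vmin (v a) (v b)) (v (a + b))].

(* a valuation on the ring K[x] (its support nu^-1(oo) may be a nonzero prime) *)
Definition is_poly_valuation (nu : {poly K} -> vinf L) : Prop :=
  [/\ nu 0 = None,
      nu 1 = Some 0,
      forall f g, nu (f * g) = vadd (nu f) (nu g)
    & forall f g, vle (vmin (nu f) (nu g)) (nu (f + g))].

Definition extends (nu : {poly K} -> vinf L) (v : K -> vinf L) : Prop :=
  forall a, nu a%:P = v a.

(* Gamma = divisible hull of vK inside Lambda *)
Definition in_Gamma (v : K -> vinf L) (g : L) : Prop :=
  exists n : nat, (0 < n)%N /\ exists a : K, a != 0 /\ v a = Some (g *+ n).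

Definition in_value_group (nu : {poly K} -> vinf L) (g : L) : Prop :=
  exists f h (x y : L), nu f = Some x /\ nu h = Some y /\ g = x - y.

Definition trivial_support (nu : {poly K} -> vinf L) : Prop :=
  forall f, nu f = None -> f = 0.

Definition value_group_torsion_mod_Gamma nu v : Prop :=
  forall g, in_value_group nu g -> exists n : nat, (0 < n)%N /\ in_Gamma v (g *+ n).

(* The residue field of nu is that of the valuation induced on the fraction
   field of K[x]/supp(nu); its elements are the classes of f/g with
   nu g < oo and nu f >= nu g.  Such a class is algebraic over the residue
   field of v iff it is a root of a monic polynomial whose coefficients are
   residues of elements c_i of the valuation ring of v, i.e.
   nu(f^n + sum_{i<n} c_i f^i g^(n-i)) > n * nu(g). *)
Definition residue_field_algebraic nu (v : K -> vinf L) : Prop :=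
  forall f g (y : L), nu g = Some y -> vle (Some y) (nu f) ->
  exists n : nat, (0 < n)%N /\ exists c : nat -> K,
    (forall i, vle (Some 0) (v (c i))) /\
    vlt (Some (y *+ n))
        (nu (f ^+ n + \sum_(i < n) (c i)%:P * f ^+ i * g ^+ (n - i))).

Definition well_specified nu v : Prop :=
  ~ [/\ trivial_support nu, value_group_torsion_mod_Gamma nu v
      & residue_field_algebraic nu v].

(* Hasse--Schmidt derivative: mathcomp's p^`N(s) (= nderivn s p),
   which satisfies f(x+y) = sum_s (f^`N(s))(x) y^s. *)
Definition hasse (s : nat) (f : {poly K}) : {poly K} := f^`N(s).

Definition constant_poly (f : {poly K}) : bool := (size f <= 1)%N.

(* eps_nu(f) < eps_nu(g), where eps_nu(a) = -oo for constants and, for a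
   nonconstant f with nu f < oo,
     eps_nu(f) = max_{s>=1} (nu f - nu (d_s f)) / s
   (terms with nu(d_s f) = oo contribute -oo).  Since Lambda is a torsion-free
   ordered group, a/s < b/t iff t*a < s*b; the max over s is attained, so
   eps(f) < eps(g) iff some t realizing eps(g) beats every s-term of f. *)
Definition level_lt (nu : {poly K} -> vinf L) (f g : {poly K}) : Prop :=
  (constant_poly f /\ ~~ constant_poly g /\ exists y, nu g = Some y)
  \/
  (~~ constant_poly f /\ ~~ constant_poly g /\
   exists x y, nu f = Some x /\ nu g = Some y /\
   exists t : nat, (1 <= t)%N /\ exists b : L, nu (hasse t g) = Some b /\
     forall s : nat, (1 <= s)%N -> forall a : L, nu (hasse s f) = Some a ->
       (x - a) *+ t < (y - b) *+ s).

Definition key_poly nu (Q : {poly K}) : Prop :=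
  Q \is monic /\ forall f : {poly K}, (size f < size Q)%N -> level_lt nu f Q.

Definition Psi nu (m : nat) (Q : {poly K}) : Prop :=
  key_poly nu Q /\ size Q = m.+1.

(* Q-expansion coefficients: f = sum_i f_{Q,i} Q^i with deg f_{Q,i} < deg Q *)
Definition qcoef (Q f : {poly K}) (i : nat) : {poly K} :=
  (iter i (fun g => g %/ Q) f) %% Q.

(* nu_Q(f) = min_i nu(f_{Q,i} Q^i); all terms with i >= size f vanish *)
Definition nuQ nu (Q f : {poly K}) : vinf L :=
  \big[@vmin L/None]_(i < size f) nu (qcoef Q f i * Q ^+ i).

Definition degQ nu (Q f : {poly K}) : nat :=
  \big[maxn/0%N]_(i < size f | nu (qcoef Q f i * Q ^+ i) == nuQ nu Q f) (i : nat).

End Valuations.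

(* Main.v *)
Require Import Defs.
From HB Require Import structures.
From mathcomp Require Import all_boot all_order all_algebra.
From mathcomp Require Import ring zify.
Set Implicit Arguments. Unset Strict Implicit. Unset Printing Implicit Defensive.
Import Order.TTheory GRing.Theory Num.Theory.
Local Open Scope ring_scope.
Section OG.
Variable (L : porderZmodType) (hL : divisible_oag L).

Lemma lerD2r (x y z : L) : (x + z <= y + z) = (x <= y).
Proof.
apply/idP/idP => h; last by apply: doag_addr.
by have := doag_addr hL (- z) h; rewrite !addrK.
Qed.

Lemma lerD2l (x y z : L) : (z + x <= z + y) = (x <= y).
Proof. by rewrite ![z + _]addrC lerD2r. Qed.

Lemma ltrD2r (x y z : L) : (x + z < y + z) = (x < y).
Proof. by rewrite !lt_neqAle lerD2r (inj_eq (addIr z)). Qed.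

Lemma ltrD2l (x y z : L) : (z + x < z + y) = (x < y).
Proof. by rewrite ![z + _]addrC ltrD2r. Qed.

Lemma lerDD (a b c d : L) : a <= b -> c <= d -> a + c <= b + d.
Proof.
move=> h1 h2; apply: (@le_trans _ _ (b + c)); first by rewrite lerD2r.
by rewrite lerD2l.
Qed.

Lemma ltr_leDD (a b c d : L) : a < b -> c <= d -> a + c < b + d.
Proof.
move=> h1 h2; apply: (@lt_le_trans _ _ (b + c)); first by rewrite ltrD2r.
by rewrite lerD2l.
Qed.

Lemma ler_ltDD (a b c d : L) : a <= b -> c < d -> a + c < b + d.
Proof. by move=> h1 h2; rewrite addrC [b + _]addrC; apply: ltr_leDD. Qed.

Lemma ltNge' (x y : L) : (x < y) = ~~ (y <= x).
Proof.
case: (boolP (y <= x)) => h.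
  by apply/negbTE; apply/negP => h'; have := lt_le_trans h' h; rewrite ltxx.
have := doag_total hL x y; rewrite (negbTE h) orbF => h'.
by rewrite lt_neqAle h' andbT; apply/eqP => e; rewrite e lexx in h.
Qed.

Lemma leNgt' (x y : L) : (x <= y) = ~~ (y < x).
Proof. by rewrite ltNge' negbK. Qed.

Lemma ler_opp (x y : L) : x <= y -> - y <= - x.
Proof.
move=> h; have := doag_addr hL (- x - y) h.
by rewrite addrA subrr add0r addrCA subrr addr0.
Qed.

Lemma ltr_opp (x y : L) : x < y -> - y < - x.
Proof.
move=> h; rewrite lt_neqAle ler_opp ?andbT ?(ltW h) //.
by apply/eqP => /oppr_inj e; rewrite e ltxx in h.
Qed.

Lemma ler_mn (x y : L) n : x <= y -> x *+ n <= y *+ n.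
Proof.
move=> h; elim: n => [|n IH]; first by rewrite !mulr0n.
by rewrite !mulrS lerDD.
Qed.

Lemma ltr_mn (x y : L) n : (0 < n)%N -> x < y -> x *+ n < y *+ n.
Proof.
case: n => // n _ h; elim: n => [|n IH]; first by rewrite !mulr1n.
by rewrite mulrS [y *+ _]mulrS ltr_leDD // ltW.
Qed.

Lemma ltr_mn_cancel (x y : L) n : x *+ n < y *+ n -> x < y.
Proof.
move=> h; rewrite ltNge'; apply/negP => h'.
by have := lt_le_trans h (ler_mn n h'); rewrite ltxx.
Qed.

Lemma ler_mn_cancel (x y : L) n : (0 < n)%N -> x *+ n <= y *+ n -> x <= y.
Proof.
move=> n0 h; rewrite leNgt'; apply/negP => h'.
by have := le_lt_trans h (ltr_mn n0 h'); rewrite ltxx.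
Qed.

Lemma ler_subl (x z z' : L) : z' <= z -> x - z <= x - z'.
Proof. by move=> h; rewrite lerD2l ler_opp. Qed.

Lemma ler_subr (x x' z : L) : x' <= x -> x' - z <= x - z.
Proof. by move=> h; rewrite lerD2r. Qed.

Lemma ltr_subl (x z z' : L) : z' < z -> x - z < x - z'.
Proof. by move=> h; rewrite ltrD2l ltr_opp. Qed.

Lemma ler_mn2r (x : L) n k : 0 <= x -> (n <= k)%N -> x *+ n <= x *+ k.
Proof.
move=> x0 nk; rewrite -(subnKC nk) mulrnDr -{1}[x *+ n]addr0 lerD2l.
by have := ler_mn (k - n) x0; rewrite mul0rn.
Qed.

Lemma addr2_0 (x : L) : x + x = 0 -> x = 0.
Proof.
move=> h; case/orP: (doag_total hL x 0) => h'.
  have : x + x <= x + 0 by rewrite lerD2l.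
  by rewrite h addr0 => h''; apply/eqP; rewrite eq_le h' h''.
have : x + 0 <= x + x by rewrite lerD2l.
by rewrite h addr0 => h''; apply/eqP; rewrite eq_le h' h''.
Qed.
End OG.
Section Vinf2.
Variable (L : porderZmodType) (hL : divisible_oag L).

Lemma vle_refl (a : vinf L) : vle a a.
Proof. by case: a => //= x. Qed.

Lemma vle_trans (a b c : vinf L) : vle a b -> vle b c -> vle a c.
Proof.
by case: a => [x|]; case: b => [y|]; case: c => [z|] //=; apply: le_trans.
Qed.

Lemma vle_total (a b : vinf L) : vle a b || vle b a.
Proof. by case: a => [x|]; case: b => [y|] //=; apply: doag_total. Qed.

Lemma vmin_case (a b : vinf L) : vmin a b = a \/ vmin a b = b.
Proof. by rewrite /vmin; case: ifP; [left|right]. Qed.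

Lemma vmin_l (a b : vinf L) : vle (vmin a b) a.
Proof.
rewrite /vmin; case: ifP => h; first exact: vle_refl.
by case/orP: (vle_total a b) => //; rewrite h.
Qed.

Lemma vmin_r (a b : vinf L) : vle (vmin a b) b.
Proof.
by rewrite /vmin; case: ifP => h //; apply: vle_refl.
Qed.

Lemma vlt_vle (a b : vinf L) : vlt a b -> vle a b.
Proof. by case: a => [x|]; case: b => [y|] //= /ltW. Qed.

Lemma vlt_le_trans (a b c : vinf L) : vlt a b -> vle b c -> vlt a c.
Proof.
by case: a => [x|]; case: b => [y|]; case: c => [z|] //=; apply: lt_le_trans.
Qed.

Lemma vle_lt_trans (a b c : vinf L) : vle a b -> vlt b c -> vlt a c.
Proof.
by case: a => [x|]; case: b => [y|]; case: c => [z|] //=; apply: le_lt_trans.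
Qed.

Lemma vltNge (a b : vinf L) : vlt a b = ~~ vle b a.
Proof. by case: a => [x|]; case: b => [y|] //=; apply: ltNge'. Qed.

Lemma vlt_irr (a : vinf L) : vlt a a = false.
Proof. by case: a => //= x; rewrite ltxx. Qed.

End Vinf2.

Section Val.
Variables (K : fieldType) (L : porderZmodType) (hL : divisible_oag L).
Variable (nu : {poly K} -> vinf L) (hnu : is_poly_valuation nu).

Lemma nu0 : nu 0 = None. Proof. by case: hnu. Qed.
Lemma nu1 : nu 1 = Some 0. Proof. by case: hnu. Qed.
Lemma nuM f g : nu (f * g) = vadd (nu f) (nu g). Proof. by case: hnu. Qed.
Lemma nuD f g : vle (vmin (nu f) (nu g)) (nu (f + g)). Proof. by case: hnu. Qed.

Lemma nuN1 : nu (-1) = Some 0.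
Proof.
have := nuM (-1) (-1); rewrite mulrNN mulr1 nu1.
case: (nu (-1)) => //= c [] h; congr Some; apply: (addr2_0 hL); by rewrite -h.
Qed.

Lemma nuN f : nu (- f) = nu f.
Proof.
by rewrite -mulN1r nuM nuN1; case: (nu f) => //= x; rewrite add0r.
Qed.

Lemma nuB f g : vle (vmin (nu f) (nu g)) (nu (f - g)).
Proof. by rewrite -(nuN g); apply: nuD. Qed.

Lemma nu_ge f g c : vle c (nu f) -> vle c (nu g) -> vle c (nu (f + g)).
Proof.
move=> h1 h2; apply: vle_trans (nuD f g).
by case: (vmin_case (nu f) (nu g)) => ->.
Qed.

Lemma nu_gt f g c : vlt c (nu f) -> vlt c (nu g) -> vlt c (nu (f + g)).
Proof.
move=> h1 h2; apply: vlt_le_trans (nuD f g).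
by case: (vmin_case (nu f) (nu g)) => ->.
Qed.

Lemma nuD_eq f g : vlt (nu f) (nu g) -> nu (f + g) = nu f.
Proof.
move=> h.
have h1 : vle (nu f) (nu (f + g)).
  apply: nu_ge; first exact: vle_refl. exact: vlt_vle.
case: (boolP (vlt (nu f) (nu (f + g)))) => h2.
  have : vlt (nu f) (nu ((f + g) + - g)) by apply: nu_gt; rewrite // nuN.
  by rewrite addrK vlt_irr.
rewrite (vltNge hL) negbK in h2.
move: h1 h2; case: (nu f) => [x|]; case: (nu (f + g)) => [y|] //= h1 h2.
by congr Some; apply/eqP; rewrite eq_le h1 h2.
Qed.

End Val.
Section Hasse.
Variable K : fieldType.

Lemma nderivn0p n : (0 : {poly K})^`N(n) = 0.
Proof. by rewrite nderivn_poly0 // size_poly0. Qed.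

Lemma nderivnMX (p : {poly K}) n : (p * 'X)^`N(n.+1) = p^`N(n) + p^`N(n.+1) * 'X.
Proof. by rewrite -[p * 'X]addr0 -polyC0 nderivnMXaddC. Qed.

Lemma hasseM (p q : {poly K}) s :
  (p * q)^`N(s) = \sum_(i < s.+1) p^`N(i) * q^`N(s - i).
Proof.
elim/poly_ind: p s => [|p c IH] s.
  by rewrite mul0r nderivn0p big1 // => i _; rewrite nderivn0p mul0r.
have -> : (p * 'X + c%:P) * q = (p * q) * 'X + c *: q.
  by rewrite mulrDl mul_polyC mulrAC.
case: s => [|s].
  rewrite big_ord_recl big_ord0 !nderivn0 addr0.
  by rewrite mulrDl mul_polyC mulrAC.
rewrite raddfD /= nderivnZ nderivnMX !IH (big_ord_recl s.+1) nderivn0 subn0.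
rewrite [RHS](big_ord_recl s.+1) nderivn0 subn0 /=.
under [in RHS]eq_bigr => i _ do rewrite /bump /= add1n nderivnMXaddC mulrDl.
rewrite big_split /=.
set S2 := \sum_(i < s.+1) p^`N(bump 0 i) * _.
set S3 := \sum_(i < s.+1) p^`N(i.+1) * 'X * _.
have -> : S3 = S2 * 'X.
  rewrite /S3 /S2 big_distrl /=; apply: eq_bigr => i _.
  by rewrite /bump /= add1n -!mulrA (mulrC 'X).
have -> : \sum_(i < s.+1) p^`N(i) * q^`N(s.+1 - i.+1) = \sum_(i < s.+1) p^`N(i) * q^`N(s - i).
  by apply: eq_bigr => i _; rewrite subSS.
rewrite -mul_polyC; ring.
Qed.
End Hasse.
Section BPred.
Variables (L : porderZmodType) (hL : divisible_oag L) (t : nat) (E : L).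

Definition Bs (w : vinf L) (x : L) (s : nat) : bool :=
  match w with None => true | Some z => (x - z) *+ t < E *+ s end.
Definition Bw (w : vinf L) (x : L) (s : nat) : bool :=
  match w with None => true | Some z => (x - z) *+ t <= E *+ s end.

Lemma Bs_Bw w x s : Bs w x s -> Bw w x s.
Proof. by case: w => //= z /ltW. Qed.

Lemma Bs_mono w w' x s : vle w w' -> Bs w x s -> Bs w' x s.
Proof.
case: w => [z|]; case: w' => [z'|] //= h1 h2.
exact: le_lt_trans (ler_mn hL _ (ler_subl hL _ h1)) h2.
Qed.

Lemma Bs_x w x x' s : x' <= x -> Bs w x s -> Bs w x' s.
Proof.
case: w => [z|] //= h1 h2.
exact: le_lt_trans (ler_mn hL _ (ler_subr hL _ h1)) h2.
Qed.

Lemma Bw_refl x : Bw (Some x) x 0.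
Proof. by rewrite /= subrr mul0rn mulr0n. Qed.

Lemma diff_add (x1 x2 z1 z2 : L) : (x1 + x2) - (z1 + z2) = (x1 - z1) + (x2 - z2).
Proof. by rewrite opprD addrACA. Qed.

Lemma B_add_ws w1 w2 x1 x2 s1 s2 :
  Bw w1 x1 s1 -> Bs w2 x2 s2 -> Bs (vadd w1 w2) (x1 + x2) (s1 + s2).
Proof.
case: w1 => [z1|]; case: w2 => [z2|] //= h1 h2.
by rewrite diff_add mulrnDl mulrnDr (ler_ltDD hL).
Qed.

Lemma B_add_sw w1 w2 x1 x2 s1 s2 :
  Bs w1 x1 s1 -> Bw w2 x2 s2 -> Bs (vadd w1 w2) (x1 + x2) (s1 + s2).
Proof.
case: w1 => [z1|]; case: w2 => [z2|] //= h1 h2.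
by rewrite diff_add mulrnDl mulrnDr (ltr_leDD hL).
Qed.

Lemma B_add_ww w1 w2 x1 x2 s1 s2 :
  Bw w1 x1 s1 -> Bw w2 x2 s2 -> Bw (vadd w1 w2) (x1 + x2) (s1 + s2).
Proof.
case: w1 => [z1|]; case: w2 => [z2|] //= h1 h2.
by rewrite diff_add mulrnDl mulrnDr (lerDD hL).
Qed.

Lemma Bs_t z x : Bs (Some z) x t -> x - E < z.
Proof.
move=> /= /(ltr_mn_cancel hL) h.
by rewrite -(ltrD2r hL _ _ (z - E)) addrA subrK [E + _]addrC subrK in h.
Qed.
End BPred.
Section BTrans.
Variables (L : porderZmodType) (hL : divisible_oag L).

Lemma mn_swap (u : L) a b : u *+ a *+ b = u *+ b *+ a.
Proof. by rewrite -!mulrnA mulnC. Qed.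

Lemma lt_scale (u E E' : L) t t' s :
  (0 < t')%N -> E *+ t' <= E' *+ t -> u *+ t < E *+ s -> u *+ t' < E' *+ s.
Proof.
move=> t0 hE h; apply: (ltr_mn_cancel hL (n := t)).
rewrite mn_swap; apply: (lt_le_trans (ltr_mn hL t0 h)).
rewrite mn_swap [E' *+ s *+ t]mn_swap; exact: ler_mn.
Qed.

Lemma le_scale (u E E' : L) t t' s :
  (0 < t)%N -> E *+ t' <= E' *+ t -> u *+ t <= E *+ s -> u *+ t' <= E' *+ s.
Proof.
move=> t0 hE h; apply: (ler_mn_cancel hL t0).
rewrite mn_swap; apply: (le_trans (ler_mn hL t' h)).
rewrite mn_swap [E' *+ s *+ t]mn_swap; exact: ler_mn.
Qed.
End BTrans.
Section Val2.
Variables (K : fieldType) (L : porderZmodType) (hL : divisible_oag L).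
Variable (nu : {poly K} -> vinf L) (hnu : is_poly_valuation nu).

Lemma Bs_nuD t E x s a c :
  Bs t E (nu a) x s -> Bs t E (nu c) x s -> Bs t E (nu (a + c)) x s.
Proof.
move=> ha hc; apply: (Bs_mono hL (nuD hnu a c)).
by case: (vmin_case (nu a) (nu c)) => ->.
Qed.

Lemma Bs_nuB t E x s a c :
  Bs t E (nu a) x s -> Bs t E (nu c) x s -> Bs t E (nu (a - c)) x s.
Proof. by move=> ha hc; apply: Bs_nuD => //; rewrite nuN. Qed.

Lemma Bs_sum t E x s I (r : seq I) (P : pred I) (F : I -> {poly K}) :
  (forall i, P i -> Bs t E (nu (F i)) x s) ->
  Bs t E (nu (\sum_(i <- r | P i) F i)) x s.
Proof.
move=> h; apply: (big_ind (fun p => Bs t E (nu p) x s)) => //.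
  by rewrite (nu0 hnu).
by move=> a c; apply: Bs_nuD.
Qed.

Lemma vlt_sum c I (r : seq I) (P : pred I) (F : I -> {poly K}) :
  (forall i, P i -> vlt (Some c) (nu (F i))) ->
  vlt (Some c) (nu (\sum_(i <- r | P i) F i)).
Proof.
move=> h; apply: (big_ind (fun p => vlt (Some c) (nu p))) => //.
  by rewrite (nu0 hnu).
by move=> a b; apply: nu_gt.
Qed.

Lemma vle_sum c I (r : seq I) (P : pred I) (F : I -> {poly K}) :
  (forall i, P i -> vle c (nu (F i))) ->
  vle c (nu (\sum_(i <- r | P i) F i)).
Proof.
move=> h; apply: (big_ind (fun p => vle c (nu p))) => //.
  by rewrite (nu0 hnu); case: c {h}.
by move=> a b; apply: nu_ge.
Qed.

Lemma nu_const_fin (f : {poly K}) : f != 0 -> (size f <= 1)%N -> exists x, nu f = Some x.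
Proof.
move=> nz /size1_polyC e.
have c0 : f`_0 != 0 by apply: contra nz => /eqP h; rewrite e h.
have := nuM hnu (f`_0)%:P (f`_0)^-1%:P.
rewrite -polyCM mulfV // (nu1 hnu) -e.
by case: (nu f) => [x|] //= _; exists x.
Qed.

Lemma nu_mulsome (f g : {poly K}) x y : nu f = Some x -> nu g = Some y -> nu (f * g) = Some (x + y).
Proof. by move=> hf hg; rewrite nuM // hf hg. Qed.

Lemma nu_expsome (f : {poly K}) n y : nu f = Some y -> nu (f ^+ n) = Some (y *+ n).
Proof.
move=> hf; elim: n => [|n IH]; first by rewrite expr0 mulr0n nu1.
by rewrite exprS (nu_mulsome hf IH) mulrS.
Qed.
End Val2.
Section Key.
Variables (K : fieldType) (L : porderZmodType) (hL : divisible_oag L).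
Variable (nu : {poly K} -> vinf L) (hnu : is_poly_valuation nu).
Variables (Q : {poly K}) (hkey : key_poly nu Q) (hsQ : (1 < size Q)%N).

Lemma nuQ_fin : exists y, nu Q = Some y.
Proof.
case: hkey => _ /(_ 0); rewrite size_poly0 => /(_ (ltnW hsQ)).
by case => [[_ [_ h]] | [h _]] //; rewrite /constant_poly size_poly0 in h.
Qed.

Lemma nz_fin (g : {poly K}) : g != 0 -> (size g < size Q)%N -> exists x, nu g = Some x.
Proof.
move=> nz sg; case: (leqP (size g) 1) => s1; first exact: nu_const_fin.
case: hkey => _ /(_ g sg); case => [[h _] | [_ [_ [x [y' [h _]]]]]].
  by rewrite /constant_poly leqNgt s1 in h.
by exists x.
Qed.

Variable y : L.
Hypothesis hy : nu Q = Some y.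

Lemma select N : (exists s, [/\ 0 < s, s <= N & nu Q^`N(s) != None])%N ->
  exists t b, [/\ (0 < t <= N)%N, nu Q^`N(t) = Some b &
    forall s, (0 < s <= N)%N -> Bw t (y - b) (nu Q^`N(s)) y s].
Proof.
elim: N => [|N IH]; first by case=> s [s0 sN]; move: s0; rewrite leqn0 in sN; rewrite (eqP sN).
move=> hex.
have hcand : (exists s, [/\ 0 < s, s <= N & nu Q^`N(s) != None])%N \/
             (forall s, (0 < s <= N)%N -> nu Q^`N(s) = None).
  case: (boolP [exists s : 'I_N.+1, (0 < s)%N && (nu Q^`N(s) != None)]).
    case/existsP=> s /andP [s0 h]; left; exists s; split => //.
    by rewrite -ltnS ltn_ord.
  rewrite negb_exists => /forallP h; right => s /andP [s0 sN].
  have := h (Ordinal (sN : (s < N.+1)%N)); rewrite /= s0 /=.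
  by case: (nu Q^`N(s)).
case e : (nu Q^`N(N.+1)) => [b'|].
- case: hcand => [hc | hnone].
  + have [t [b [/andP [t0 tN] ht hall]]] := IH hc.
    case: (boolP (Bw t (y - b) (Some b') y N.+1)) => hb.
    * exists t, b; split => //; first by rewrite t0 (leq_trans tN).
      move=> s /andP [s0]; rewrite leq_eqVlt => /orP [/eqP -> | sN]; first by rewrite e.
      by apply: hall; rewrite s0.
    * exists N.+1, b'; split; rewrite ?leqnn //.
      move=> s /andP [s0]; rewrite leq_eqVlt => /orP [/eqP -> | sN].
        by rewrite e /= lexx.
      have := hall s; rewrite s0 -ltnS sN => /(_ isT).
      case: (nu Q^`N(s)) => [z|] //= hz.
      apply: (le_scale hL (t := t) (E := y - b)) => //.
      rewrite /= -(ltNge' hL) in hb.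
      exact: ltW.
  + exists N.+1, b'; split; rewrite ?leqnn //.
    move=> s /andP [s0]; rewrite leq_eqVlt => /orP [/eqP -> | sN].
      by rewrite e /= lexx.
    by rewrite hnone // s0.
- have hc : (exists s, [/\ 0 < s, s <= N & nu Q^`N(s) != None])%N.
    case: hex => s [s0 sN hs]; exists s; split => //.
    move: sN; rewrite leq_eqVlt => /orP [/eqP es | //].
    by rewrite es e in hs.
  have [t [b [/andP [t0 tN] ht hall]]] := IH hc.
  exists t, b; split => //; first by rewrite t0 (leq_trans tN).
  move=> s /andP [s0]; rewrite leq_eqVlt => /orP [/eqP -> | sN]; first by rewrite e.
  by apply: hall; rewrite s0.
Qed.

Lemma key_uniform : exists t b, [/\ (0 < t)%N, nu Q^`N(t) = Some b,
  (forall s, Bw t (y - b) (nu Q^`N(s)) y s) &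
  forall g : {poly K}, g != 0 -> (size g < size Q)%N -> exists x, nu g = Some x /\
     forall s, (0 < s)%N -> Bs t (y - b) (nu g^`N(s)) x s].
Proof.
set m := (size Q).-1.
have hm : Q^`N(m) != 0.
  apply/eqP => h0; have := congr1 (fun p : {poly K} => p`_0) h0; rewrite /= coef_nderivn addn0 binn mulr1n coef0.
  have := hkey.1 => /monicP; rewrite lead_coefE => -> /eqP; by rewrite oner_eq0.
have hsm : (size Q^`N(m) <= 1)%N.
  rewrite /nderivn; apply: leq_trans (size_poly _ _) _; rewrite /m; lia.
have [t [b [/andP [t0 tN] ht hall]]] : exists t b, [/\ (0 < t <= size Q)%N, nu Q^`N(t) = Some b &
    forall s, (0 < s <= size Q)%N -> Bw t (y - b) (nu Q^`N(s)) y s].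
  apply: select; exists m; split; rewrite /m; try lia.
  by have [x ->] := nu_const_fin hnu hm hsm.
have hallB : forall s, Bw t (y - b) (nu Q^`N(s)) y s.
  move=> s; case: (posnP s) => [-> | s0]; first by rewrite nderivn0 hy Bw_refl.
  case: (leqP s (size Q)) => sQ; first by apply: hall; rewrite s0.
  by rewrite nderivn_poly0 ?(nu0 hnu) // ltnW.
exists t, b; split => // g nz sg.
have [x hx] := nz_fin nz sg.
exists x; split => // s s0.
case: (leqP (size g) 1) => s1.
  by rewrite nderivn_poly0 ?(nu0 hnu) // (leq_trans s1).
case: hkey => _ /(_ g sg); case => [[h _] | [_ [_ [x' [y' [hx' [hy' [t' [t'0 [b' [hb' hh]]]]]]]]]]].
  by rewrite /constant_poly leqNgt s1 in h.
rewrite hx in hx'; case: hx' => ex; subst x'.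
rewrite hy in hy'; case: hy' => ey; subst y'.
have hbt := hallB t'; rewrite hb' /= in hbt.
case e : (nu g^`N(s)) => [a|] //=.
apply: (lt_scale hL (t := t') (E := y - b')) => //.
exact: hh.
Qed.
End Key.
Section KeyProd.
Variables (K : fieldType) (L : porderZmodType) (hL : divisible_oag L).
Variable (nu : {poly K} -> vinf L) (hnu : is_poly_valuation nu).
Variables (Q : {poly K}) (hQm : Q \is monic) (y b : L) (t : nat).
Hypotheses (ht0 : (0 < t)%N) (hy : nu Q = Some y) (hb : nu Q^`N(t) = Some b).
Hypothesis hQB : forall s, Bw t (y - b) (nu Q^`N(s)) y s.
Hypothesis hU : forall g : {poly K}, g != 0 -> (size g < size Q)%N -> exists x, nu g = Some x /\
     forall s, (0 < s)%N -> Bs t (y - b) (nu g^`N(s)) x s.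

Local Notation E := (y - b).

Lemma U_Bw (g : {poly K}) x : nu g = Some x ->
  (forall s, (0 < s)%N -> Bs t E (nu g^`N(s)) x s) -> forall s, Bw t E (nu g^`N(s)) x s.
Proof.
move=> hg h s; case: (posnP s) => [-> | s0]; first by rewrite nderivn0 hg Bw_refl.
exact/Bs_Bw/h.
Qed.

Lemma vle_nuB c f g : vle c (nu f) -> vle c (nu g) -> vle c (nu (f - g)).
Proof. by move=> h1 h2; apply: (nu_ge hnu) => //; rewrite (nuN hL hnu). Qed.

Lemma Q_nz : Q != 0.
Proof. by apply/eqP => e; move: hQm; rewrite e monicE lead_coef0 eq_sym oner_eq0. Qed.

Lemma keyprod (a c : {poly K}) : a != 0 -> c != 0 ->
  (size a < size Q)%N -> (size c < size Q)%N ->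
  vlt (nu (a * c)) (nu ((a * c) %/ Q * Q)).
Proof.
move=> a0 c0 sa sc.
have [x1 [ha hUa]] := hU a0 sa.
have [x2 [hc hUc]] := hU c0 sc.
have hac : nu (a * c) = Some (x1 + x2) by rewrite nuM // ha hc.
set q := (a * c) %/ Q.
set r := (a * c) %% Q.
have hQ0 := Q_nz.
have sq : (size q < size Q)%N.
  rewrite /q size_divp //; have := size_mul_leq a c; move: sa sc.
  move: (size (a * c)%R) (size a) (size c) (size Q) => n1 n2 n3 n4; lia.
have sr : (size r < size Q)%N by rewrite /r ltn_modp.
have er : r = a * c - q * Q by rewrite /r /q {2}(divp_eq (a * c) Q) addrC addKr.
have [-> | q0] := eqVneq q 0; first by rewrite mul0r (nu0 hnu) hac.
have [w [hq hUq]] := hU q0 sq.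
have hqQ : nu (q * Q) = Some (w + y) by rewrite nuM // hq hy.
rewrite hac hqQ /= (ltNge' hL); apply/negP => hle.
have Hi : Bs t E (nu (a * c)^`N(t)) (x1 + x2) t.
  rewrite hasseM; apply: (Bs_sum hL hnu) => i _; rewrite nuM //.
  have it : (i <= t)%N by rewrite -ltnS ltn_ord.
  case: (posnP i) => [i0 | ip].
    have h2 : Bs t E (nu c^`N(t - i)) x2 (t - i)%N by apply: hUc; rewrite i0 subn0.
    by have := B_add_ws hL (U_Bw ha hUa i) h2; rewrite subnKC.
  by have := B_add_sw hL (hUa i ip) (U_Bw hc hUc (t - i)%N); rewrite subnKC.
have Hr : Bs t E (nu r^`N(t)) (w + y) t.
  have [-> | r0] := eqVneq r 0; first by rewrite nderivn0p (nu0 hnu).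
  have [xr [hr hUr]] := hU r0 sr.
  apply: (Bs_x hL (x := xr)); last exact: hUr.
  have : vle (Some (w + y)) (nu r).
    rewrite er; apply: vle_nuB; last by rewrite hqQ /= lexx.
    by rewrite hac.
  by rewrite hr.
have Hq : Bs t E (nu (q * Q)^`N(t)) (w + y) t.
  have -> : q * Q = a * c - r by rewrite er opprB addrC subrK.
  rewrite nderivnB; apply: (Bs_nuB hL hnu) => //.
  exact: (Bs_x hL hle).
move: Hq; rewrite hasseM big_ord_recl nderivn0 subn0.
set rest := \sum_(i < t) _.
have hrest : vlt (Some (w + b)) (nu rest).
  have : Bs t E (nu rest) (w + y) t.
    apply: (Bs_sum hL hnu) => i _; rewrite nuM //.
    have it : (bump 0 i <= t)%N by rewrite /bump /= add1n ltn_ord.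
    by have := B_add_sw hL (hUq (bump 0 i) isT) (hQB (t - bump 0 i)%N); rewrite subnKC.
  case: (nu rest) => [z|] // /(Bs_t hL).
  by rewrite opprB addrA addrAC addrK.
have hfirst : nu (q * Q^`N(t)) = Some (w + b) by rewrite nuM // hq hb.
rewrite (nuD_eq hL hnu) //; last by rewrite hfirst.
rewrite hfirst => /(Bs_t hL).
by rewrite opprB addrA addrAC addrK ltxx.
Qed.
End KeyProd.
Section QExp.
Variables (K : fieldType) (Q : {poly K}) (hQ0 : Q != 0).

Lemma qcoefS f i : qcoef Q f i.+1 = qcoef Q (f %/ Q) i.
Proof. by rewrite /qcoef iterSr. Qed.

Lemma qcoef0 f : qcoef Q f 0 = f %% Q.
Proof. by []. Qed.

Lemma qcoef_zero i : qcoef Q 0 i = 0.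
Proof. elim: i => [|i IH]; by rewrite ?qcoef0 ?qcoefS ?div0p ?mod0p. Qed.

Lemma qcoefD f g i : qcoef Q (f + g) i = qcoef Q f i + qcoef Q g i.
Proof.
elim: i f g => [|i IH] f g; first by rewrite !qcoef0 modpD.
by rewrite !qcoefS divpD IH.
Qed.

Lemma qcoef_sum I (r : seq I) (P : pred I) (F : I -> {poly K}) i :
  qcoef Q (\sum_(j <- r | P j) F j) i = \sum_(j <- r | P j) qcoef Q (F j) i.
Proof.
apply: (big_morph (fun f => qcoef Q f i)); first by move=> ??; apply: qcoefD.
exact: qcoef_zero.
Qed.

Lemma qcoef_small (c : {poly K}) i : (size c < size Q)%N -> qcoef Q c i = if i == 0%N then c else 0.
Proof.
move=> sc; case: i => [|i]; first by rewrite qcoef0 modp_small.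
by rewrite qcoefS divp_small // qcoef_zero.
Qed.

Lemma qcoef_mono (c : {poly K}) j i : (size c < size Q)%N ->
  qcoef Q (c * Q ^+ j) i = if i == j then c else 0.
Proof.
move=> sc; elim: j i => [|j IH] i; first by rewrite expr0 mulr1 qcoef_small.
case: i => [|i].
  by rewrite qcoef0 exprSr mulrA modp_mull.
by rewrite qcoefS exprSr mulrA mulpK // IH eqSS.
Qed.

Lemma qcoef_size f i : (size (qcoef Q f i) < size Q)%N.
Proof. by rewrite /qcoef ltn_modp. Qed.

Lemma qcoef_mulQ p i : qcoef Q (p * Q) i = if i is i'.+1 then qcoef Q p i' else 0.
Proof.
case: i => [|i]; first by rewrite qcoef0 modp_mull.
by rewrite qcoefS mulpK.
Qed.

Hypothesis hsQ : (1 < size Q)%N.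

Lemma qexp_N (f : {poly K}) N : (size f <= N)%N -> f = \sum_(i < N) qcoef Q f i * Q ^+ i.
Proof.
elim: N f => [|N IH] f sf.
  by rewrite big_ord0; move: sf; rewrite leqn0 size_poly_eq0 => /eqP.
rewrite big_ord_recl qcoef0 expr0 mulr1.
have sd : (size (f %/ Q)%R <= N)%N.
  rewrite size_divp //; move: sf hsQ.
  move: (size Q) => b; move: (size f) => a; lia.
rewrite {1}(divp_eq f Q) (IH _ sd) addrC big_distrl /=; congr (_ + _).
by apply: eq_bigr => i _; rewrite qcoefS /bump /= add1n exprSr mulrA.
Qed.

Lemma qexp (f : {poly K}) : f = \sum_(i < size f) qcoef Q f i * Q ^+ i.
Proof. exact: qexp_N. Qed.

Lemma qcoef_big (f : {poly K}) i : (size f <= i)%N -> qcoef Q f i = 0.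
Proof.
move=> fi; rewrite (qexp f) qcoef_sum big1 // => j _.
rewrite qcoef_mono ?qcoef_size //; case: eqP => // e.
by have := ltn_ord j; rewrite -e ltnNge fi.
Qed.
End QExp.
Section Carry.
Variables (K : fieldType) (L : porderZmodType) (hL : divisible_oag L).
Variable (nu : {poly K} -> vinf L) (hnu : is_poly_valuation nu).
Variables (Q : {poly K}) (hkey : key_poly nu Q) (hsQ : (1 < size Q)%N).

Lemma carry (a c : {poly K}) : a != 0 -> c != 0 ->
  (size a < size Q)%N -> (size c < size Q)%N ->
  nu ((a * c) %% Q) = nu (a * c) /\ vlt (nu (a * c)) (nu ((a * c) %/ Q * Q)).
Proof.
move=> a0 c0 sa sc.
have [y hy] := nuQ_fin hkey hsQ.
have [t [b [t0 hb hQB hU]]] := key_uniform hL hnu hkey hsQ hy.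
have hlt := keyprod hL hnu hkey.1 t0 hy hb hQB hU a0 c0 sa sc.
split => //.
have -> : (a * c) %% Q = a * c + - ((a * c) %/ Q * Q).
  by rewrite {2}(divp_eq (a * c) Q) addrC addKr.
by rewrite (nuD_eq hL hnu) // (nuN hL hnu).
Qed.
End Carry.
Section TStep.
Variables (K : fieldType) (L : porderZmodType) (hL : divisible_oag L).
Variable (nu : {poly K} -> vinf L) (hnu : is_poly_valuation nu).
Variables (Q h : {poly K}) (y : L).
Hypotheses (hQ0 : Q != 0) (hsQ : (1 < size Q)%N) (hy : nu Q = Some y)
  (hh : nu h = Some y) (hsh : (size h < size Q)%N).
Hypothesis hcarry : forall a : {poly K}, a != 0 -> (size a < size Q)%N ->
  nu ((h * a) %% Q) = nu (h * a) /\ vlt (nu (h * a)) (nu ((h * a) %/ Q * Q)).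

Definition Tp (p : {poly K}) (lam : L) (k : nat) (c : {poly K}) :=
  [/\ forall i, vle (Some lam) (nu (qcoef Q p i * Q ^+ i)),
      forall i, (k < i)%N -> vlt (Some lam) (nu (qcoef Q p i * Q ^+ i))
    & vlt (Some lam) (nu ((qcoef Q p k - c) * Q ^+ k))].

Local Notation rr p j := ((h * qcoef Q p j) %% Q).
Local Notation qq p j := ((h * qcoef Q p j) %/ Q).

Lemma size_qq p j : (size (qq p j) < size Q)%N.
Proof.
rewrite size_divp //; have := size_mul_leq h (qcoef Q p j).
have := qcoef_size hQ0 p j; move: hsh hsQ.
move: (size Q) => a; move: (size h) => b; move: (size (qcoef Q p j)) => c.
move: (size (h * qcoef Q p j)%R) => d; lia.
Qed.

Lemma decomp p i : qcoef Q (p * (Q + h)) i =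
  (if i is i'.+1 then qcoef Q p i' else 0) +
  \sum_(j < size p) ((if i == j then rr p j else 0) + (if i == j.+1 then qq p j else 0)).
Proof.
rewrite mulrDr qcoefD (qcoef_mulQ hQ0); congr (_ + _).
rewrite {1}(qexp hQ0 hsQ p) mulr_suml qcoef_sum; apply: eq_bigr => j _.
have -> : qcoef Q p j * Q ^+ j * h = rr p j * Q ^+ j + qq p j * Q ^+ j.+1.
  rewrite mulrAC (mulrC _ h) {1}(divp_eq (h * qcoef Q p j) Q).
  by rewrite mulrDl addrC exprS mulrA [_ * Q * _]mulrAC.
by rewrite qcoefD !qcoef_mono // ?size_qq // ltn_modp.
Qed.

Lemma nu_shift (a : {poly K}) i : nu (a * Q ^+ i.+1) = vadd (nu (a * Q ^+ i)) (Some y).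
Proof. by rewrite exprSr mulrA nuM // hy. Qed.

Lemma rr_bound p j mu : vle (Some mu) (nu (qcoef Q p j * Q ^+ j)) ->
  vle (Some (mu + y)) (nu (rr p j * Q ^+ j)) /\
  vlt (Some (mu + y)) (nu (qq p j * Q ^+ j.+1)).
Proof.
have [-> | p0] := eqVneq (qcoef Q p j) 0.
  by rewrite mulr0 mod0p div0p !mul0r (nu0 hnu).
have [e lt] := hcarry p0 (qcoef_size hQ0 p j).
rewrite !nuM // e (nuM hnu h) hh (nu_expsome hnu j.+1 hy) (nu_expsome hnu j hy).
move: lt; rewrite (nuM hnu h) hh (nuM hnu (_ %/ Q)) hy.
case: (nu (qcoef Q p j)) => [z|] //= lt1 le1.
have g1 : mu + y <= y + z + y *+ j by rewrite [y + z]addrC addrAC (lerD2r hL).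
move: lt1; case: (nu ((h * qcoef Q p j) %/ Q)) => [v|] //= lt1; split => //.
have zv : z < v by rewrite addrC (ltrD2r hL) in lt1.
rewrite mulrSr addrA (ltrD2r hL); apply: le_lt_trans le1 _; by rewrite (ltrD2r hL).
Qed.


Lemma rr_eq p j : nu (rr p j * Q ^+ j) = vadd (nu (qcoef Q p j * Q ^+ j)) (Some y).
Proof.
have [-> | p0] := eqVneq (qcoef Q p j) 0.
  by rewrite mulr0 mod0p !mul0r (nu0 hnu).
have [e _] := hcarry p0 (qcoef_size hQ0 p j).
rewrite !nuM // e (nuM hnu h) hh.
case: (nu (qcoef Q p j)) => [z|] //=; case: (nu (Q ^+ j)) => [u|] //=.
by rewrite [y + z]addrC addrAC.
Qed.

Lemma vadd_le (a : vinf L) mu : vle (Some mu) a -> vle (Some (mu + y)) (vadd a (Some y)).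
Proof. by case: a => //= z; rewrite (lerD2r hL). Qed.

Lemma vadd_lt (a : vinf L) mu : vlt (Some mu) a -> vlt (Some (mu + y)) (vadd a (Some y)).
Proof. by case: a => //= z; rewrite (ltrD2r hL). Qed.

Definition term p i := nu (qcoef Q p i * Q ^+ i).

Lemma B1_le p lam i j : (forall j, vle (Some lam) (term p j)) ->
  vle (Some (lam + y)) (nu ((if i == j then rr p j else 0) * Q ^+ i)).
Proof.
move=> hp; case: eqP => [-> | _]; last by rewrite mul0r (nu0 hnu).
by rewrite rr_eq; apply: vadd_le; apply: hp.
Qed.

Lemma B1_lt p lam k i j : (forall j, (k < j)%N -> vlt (Some lam) (term p j)) -> (k < i)%N ->
  vlt (Some (lam + y)) (nu ((if i == j then rr p j else 0) * Q ^+ i)).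
Proof.
move=> hp ki; case: eqP => [e | _]; last by rewrite mul0r (nu0 hnu).
by rewrite e rr_eq; apply: vadd_lt; apply: hp; rewrite -e.
Qed.

Lemma B2_lt p lam i j : (forall j, vle (Some lam) (term p j)) ->
  vlt (Some (lam + y)) (nu ((if i == j.+1 then qq p j else 0) * Q ^+ i)).
Proof.
move=> hp; case: eqP => [-> | _]; last by rewrite mul0r (nu0 hnu).
by have [_ ->] := rr_bound (hp j).
Qed.

Lemma decompQ p i : qcoef Q (p * (Q + h)) i * Q ^+ i =
  (if i is i'.+1 then qcoef Q p i' else 0) * Q ^+ i +
  \sum_(j < size p) ((if i == j then rr p j else 0) * Q ^+ i +
                     (if i == j.+1 then qq p j else 0) * Q ^+ i).
Proof.
rewrite decomp mulrDl mulr_suml; congr (_ + _); apply: eq_bigr => j _.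
by rewrite mulrDl.
Qed.

Lemma Tstep p lam k c : Tp p lam k c -> Tp (p * (Q + h)) (lam + y) k.+1 c.
Proof.
case=> h1 h2 h3; split.
- move=> i; rewrite decompQ; apply: (nu_ge hnu).
    case: i => [|i]; first by rewrite mul0r (nu0 hnu).
    by rewrite nu_shift; apply: vadd_le; apply: h1.
  apply: (vle_sum hnu) => j _; apply: (nu_ge hnu); first exact: B1_le.
  exact/vlt_vle/B2_lt.
- move=> i ki; rewrite decompQ; apply: (nu_gt hnu).
    case: i ki => [|i] ki; first by rewrite mul0r (nu0 hnu).
    by rewrite nu_shift; apply: vadd_lt; apply: h2.
  apply: (vlt_sum hnu) => j _; apply: (nu_gt hnu); last exact: B2_lt.
  by apply: (B1_lt (k := k)) => //; apply: ltnW.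
- have -> : (qcoef Q (p * (Q + h)) k.+1 - c) * Q ^+ k.+1 =
     (qcoef Q p k - c) * Q ^+ k.+1 +
     \sum_(j < size p) ((if k.+1 == j then rr p j else 0) * Q ^+ k.+1 +
                     (if k.+1 == j.+1 then qq p j else 0) * Q ^+ k.+1).
    rewrite mulrBl decompQ mulrBl addrAC; congr (_ + _).
  apply: (nu_gt hnu); first by rewrite nu_shift; apply: vadd_lt.
  apply: (vlt_sum hnu) => j _; apply: (nu_gt hnu); last exact: B2_lt.
  exact: (B1_lt (k := k)).
Qed.
End TStep.
Section BMin.
Variables (L : porderZmodType) (hL : divisible_oag L).

Lemma bmin_le (I : eqType) (r : seq I) (F : I -> vinf L) i : i \in r ->
  vle (\big[@vmin L/None]_(j <- r) F j) (F i).
Proof.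
elim: r => [|x r IH] //; rewrite inE big_cons => /orP [/eqP -> | ir].
  exact: vmin_l.
exact: vle_trans (vmin_r _ _) (IH ir).
Qed.

Lemma bmin_ge (I : Type) (r : seq I) (F : I -> vinf L) c :
  (forall i, vle c (F i)) -> vle c (\big[@vmin L/None]_(j <- r) F j).
Proof.
move=> h; apply: (big_ind (fun a => vle c a)) => //; first by case: c {h}.
by move=> a b ha hb; case: (vmin_case a b) => ->.
Qed.

Lemma bmin_att (I : Type) (r : seq I) (F : I -> vinf L) :
  \big[@vmin L/None]_(j <- r) F j = None \/
  exists2 i, List.In i r & \big[@vmin L/None]_(j <- r) F j = F i.
Proof.
elim: r => [|x r IH]; first by left; rewrite big_nil.
rewrite big_cons; case: (vmin_case (F x) (\big[@vmin L/None]_(j <- r) F j)) => ->.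
  by right; exists x => //; left.
case: IH => [-> | [i ir ->]]; first by left.
by right; exists i => //; right.
Qed.

Lemma vadd_lt_cancel (a b : vinf L) u : vlt (vadd a (Some u)) (vadd b (Some u)) -> vlt a b.
Proof. by case: a => [x|]; case: b => [z|] //=; rewrite (ltrD2r hL). Qed.

Lemma vadd_eq_cancel (a b : vinf L) u : vadd a (Some u) = vadd b (Some u) -> a = b.
Proof. by case: a => [x|]; case: b => [z|] //= [] /addIr ->. Qed.
End BMin.
Section NuQ.
Variables (K : fieldType) (L : porderZmodType) (hL : divisible_oag L).
Variable (nu : {poly K} -> vinf L) (hnu : is_poly_valuation nu).
Variables (Q : {poly K}) (hQ0 : Q != 0) (hsQ : (1 < size Q)%N).

Lemma nuQ_ge_all f c : (forall i, vle c (nu (qcoef Q f i * Q ^+ i))) -> vle c (nuQ nu Q f).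
Proof. by move=> h; apply: bmin_ge. Qed.

Lemma nuQ_le_term f i : vle (nuQ nu Q f) (nu (qcoef Q f i * Q ^+ i)).
Proof.
case: (ltnP i (size f)) => hi.
  have := @bmin_le L hL _ (index_enum 'I_(size f)) (fun j : 'I_(size f) => nu (qcoef Q f j * Q ^+ j))
     (Ordinal hi) (mem_index_enum _).
  by [].
rewrite qcoef_big // mul0r (nu0 hnu); by case: (nuQ nu Q f).
Qed.

Lemma nuQ_char f mu k : (forall i, vle (Some mu) (nu (qcoef Q f i * Q ^+ i))) ->
  nu (qcoef Q f k * Q ^+ k) = Some mu -> nuQ nu Q f = Some mu.
Proof.
move=> h1 h2; have := nuQ_ge_all h1; have := nuQ_le_term f k; rewrite h2.
by case: (nuQ nu Q f) => //= z h3 h4; congr Some; apply/eqP; rewrite eq_le h3 h4.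
Qed.

Lemma degQ_char f mu k : nuQ nu Q f = Some mu ->
  nu (qcoef Q f k * Q ^+ k) = Some mu ->
  (forall i, (k < i)%N -> vlt (Some mu) (nu (qcoef Q f i * Q ^+ i))) ->
  degQ nu Q f = k.
Proof.
move=> h1 h2 h3; apply/eqP; rewrite eqn_leq; apply/andP; split.
  apply/bigmax_leqP => i /eqP; rewrite h1 => e.
  rewrite leqNgt; apply/negP => /h3; by rewrite e vlt_irr.
have hk : (k < size f)%N.
  rewrite ltnNge; apply/negP => kf; move: h2; by rewrite qcoef_big // mul0r (nu0 hnu).
apply: (leq_bigmax_cond (Ordinal hk)); by rewrite /= h1 h2.
Qed.
End NuQ.
Section Arith.
Variables (L : porderZmodType) (hL : divisible_oag L).
Lemma arith (xJ xi y rho : L) (J i : nat) : y < rho -> (J < i)%N ->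
  xJ + y *+ J <= xi + y *+ i -> xJ + rho *+ J < xi + rho *+ i.
Proof.
move=> yr Ji.
have ei : i = (J + (i - J))%N by rewrite subnKC // ltnW.
have k0 : (0 < i - J)%N by rewrite subn_gt0.
move: (i - J)%N ei k0 => k -> k0.
have e1 : xi + y *+ (J + k) = y *+ J + (xi + y *+ k) by rewrite mulrnDr addrCA.
have e2 : xi + rho *+ (J + k) = rho *+ J + (xi + rho *+ k) by rewrite mulrnDr addrCA.
rewrite e1 e2 (addrC xJ) (lerD2l hL) (addrC xJ) (ltrD2l hL) => hle.
apply: le_lt_trans hle _.
rewrite (ltrD2l hL); exact: ltr_mn.
Qed.
End Arith.
Section Main.
Variables (K : fieldType) (L : porderZmodType) (hL : divisible_oag L).
Variable (nu : {poly K} -> vinf L) (hnu : is_poly_valuation nu).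
Variables (m : nat) (hm : (1 <= m)%N) (Q R : {poly K}).
Hypotheses (hQk : key_poly nu Q) (hRk : key_poly nu R)
  (sQ : size Q = m.+1) (sR : size R = m.+1) (hQR : vlt (nu Q) (nu R)).

Lemma hsQ : (1 < size Q)%N. Proof. by rewrite sQ ltnS. Qed.
Lemma hsR : (1 < size R)%N. Proof. by rewrite sR ltnS. Qed.
Lemma hQ0 : Q != 0. Proof. by rewrite -size_poly_gt0 sQ. Qed.
Lemma hR0 : R != 0. Proof. by rewrite -size_poly_gt0 sR. Qed.

Lemma size_h : (size (R - Q)%R < size Q)%N.
Proof.
have le : (size (R - Q)%R <= size Q)%N.
  apply: leq_trans (size_polyD _ _) _; rewrite size_polyN sQ -sR maxnn.
  by rewrite sR.
rewrite ltn_neqAle le andbT; apply/eqP => e.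
have : lead_coef (R - Q) = 0.
  have eRQ : size Q = size R by rewrite sQ sR.
  rewrite lead_coefE e coefB {1}eRQ -!lead_coefE.
  by rewrite (monicP hQk.1) (monicP hRk.1) subrr.
move/eqP; rewrite lead_coef_eq0 => /eqP e0; move: e; rewrite e0 size_poly0 => e.
by move: hsQ; rewrite -e.
Qed.


Variables (y rho : L) (hy : nu Q = Some y) (hr : nu R = Some rho).

Lemma yr : y < rho. Proof. by move: hQR; rewrite hy hr. Qed.

Local Notation h := (R - Q).

Lemma hh : nu h = Some y.
Proof.
rewrite addrC (nuD_eq hL hnu) (nuN hL hnu) ?hy //.
by rewrite hr /= yr.
Qed.

Lemma h0 : h != 0.
Proof. by apply/eqP => e; move: hh; rewrite e (nu0 hnu). Qed.

Lemma hQh : Q + h = R.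
Proof. by rewrite addrC subrK. Qed.

Lemma hcarry : forall a : {poly K}, a != 0 -> (size a < size Q)%N ->
  nu ((h * a) %% Q) = nu (h * a) /\ vlt (nu (h * a)) (nu ((h * a) %/ Q * Q)).
Proof. move=> a a0 sa; exact: (carry hL hnu hQk hsQ h0 a0 size_h sa). Qed.

Lemma Tj (g : {poly K}) x j : (size g < size Q)%N -> nu g = Some x ->
  Tp nu Q (g * R ^+ j) (x + y *+ j) j g.
Proof.
move=> sg hg; elim: j => [|j IH].
  rewrite expr0 mulr1 mulr0n addr0; split.
  - move=> i; rewrite qcoef_small //; case: eqP => [-> | _].
      by rewrite expr0 mulr1 hg /= lexx.
    by rewrite mul0r (nu0 hnu).
  - move=> i; rewrite qcoef_small //; case: i => // i _.
    by rewrite mul0r (nu0 hnu).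
  - by rewrite qcoef_small // subrr mul0r (nu0 hnu).
have := Tstep hL hnu hQ0 hsQ hy hh size_h hcarry IH.
by rewrite hQh -mulrA -exprSr -addrA -mulrSr.
Qed.


Variables (f : {poly K}) (hf : f != 0).

Local Notation N := (size f).
Local Notation g j := (qcoef R f j).
Local Notation lamv j := (nu (qcoef R f j * Q ^+ j)).

Lemma g_size j : (size (g j) < size Q)%N.
Proof. by rewrite sQ -sR /qcoef ltn_modp hR0. Qed.

Lemma ef : f = \sum_(j < N) g j * R ^+ j.
Proof. exact: (qexp hR0 hsR f). Qed.

Lemma lam_info j : g j != 0 -> exists x, nu (g j) = Some x /\ lamv j = Some (x + y *+ j) /\
  Tp nu Q (g j * R ^+ j) (x + y *+ j) j (g j).
Proof.
move=> g0; have [x hx] := nz_fin hnu hQk g0 (g_size j).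
exists x; split => //; split; first by rewrite nuM // hx (nu_expsome hnu j hy).
exact: Tj (g_size j) hx.
Qed.

Lemma nuQ_P j : g j != 0 -> nuQ nu Q (g j * R ^+ j) = lamv j.
Proof.
move=> g0; have [x [hx [hl [T1 T2 T3]]]] := lam_info g0.
rewrite hl; apply: (nuQ_char hL hnu hQ0 hsQ (k := j)) => //.
have -> : qcoef Q (g j * R ^+ j) j * Q ^+ j =
   g j * Q ^+ j + (qcoef Q (g j * R ^+ j) j - g j) * Q ^+ j.
  by rewrite -mulrDl addrC subrK.
by rewrite (nuD_eq hL hnu) hl //.
Qed.

Lemma main_conc :
  let d := degQ nu Q f in
  [/\ vlt (nu (qcoef Q f d)) (nu (qcoef Q f d - qcoef R f d)),
      nu (qcoef Q f d) = nu (qcoef R f d),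
      nuQ nu Q (qcoef R f d * R ^+ d) = nuQ nu Q f
        /\ (forall j : nat, nuQ nu Q (qcoef R f j * R ^+ j) = nuQ nu Q f ->
              (j <= d)%N)
    & (degQ nu R f <= d)%N].
Proof.
have [j0 hj0] : exists j0 : 'I_N, g j0 != 0.
  case: (boolP [exists j : 'I_N, g j != 0]) => [/existsP // | ].
  rewrite negb_exists => /forallP hall.
  move/negP: hf => []; apply/eqP; rewrite ef big1 // => j _.
  by have := hall j; rewrite negbK => /eqP ->; rewrite mul0r.
pose muv := \big[@vmin L/None]_(j < N) lamv j.
have hle : forall j : 'I_N, vle muv (lamv j).
  move=> j; exact: (@bmin_le L hL _ (index_enum 'I_N) (fun j : 'I_N => lamv j) j (mem_index_enum j)).
have [x0 [hx0 [hl0 _]]] := lam_info hj0.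
have [mu hmu] : exists mu, muv = Some mu.
  case E : muv => [z|]; first by exists z.
  by move: (hle j0); rewrite E hl0.
have [i0 hi0] : exists i0 : 'I_N, lamv i0 = Some mu.
  have := @bmin_att L _ (index_enum 'I_N) (fun j : 'I_N => lamv j).
  rewrite -/muv hmu; case => [// | [i _ e]]; by exists i.
have hmule : forall j : 'I_N, vle (Some mu) (lamv j) by rewrite -hmu.
pose A := [pred j : 'I_N | lamv j == Some mu].
have cA : (0 < #|A|)%N by apply/card_gt0P; exists i0; rewrite inE /= hi0.
have [J hJA hJmax] := eq_bigmax_cond (fun j : 'I_N => nat_of_ord j) cA.
have hJ : lamv J = Some mu by move: hJA; rewrite inE /= => /eqP.
have hJge : forall j : 'I_N, lamv j = Some mu -> (j <= J)%N.
  move=> j hj; rewrite -hJmax; apply: (leq_bigmax_cond (P := fun i => i \in A)).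
  by rewrite inE /= hj.
have Pge : forall (j : 'I_N) i, vle (Some mu) (nu (qcoef Q (g j * R ^+ j) i * Q ^+ i)).
  move=> j i; have [-> | gj] := eqVneq (g j) 0.
    by rewrite mul0r qcoef_zero mul0r (nu0 hnu).
  have [x [hx [hl [T1 T2 T3]]]] := lam_info gj.
  by apply: vle_trans (T1 i); have := hmule j; rewrite hl.
have Pgt : forall (j : 'I_N) i, (lamv j = Some mu -> (j < i)%N) ->
    vlt (Some mu) (nu (qcoef Q (g j * R ^+ j) i * Q ^+ i)).
  move=> j i hji; have [-> | gj] := eqVneq (g j) 0.
    by rewrite mul0r qcoef_zero mul0r (nu0 hnu).
  have [x [hx [hl [T1 T2 T3]]]] := lam_info gj.
  have := hmule j; rewrite hl /= le_eqVlt => /orP [/eqP e | lt].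
    by rewrite e; apply: T2; apply: hji; rewrite hl e.
  exact: (vlt_le_trans (a := Some mu) (b := Some (x + y *+ j)) lt (T1 i)).
have hcoef : forall i, qcoef Q f i = \sum_(j < N) qcoef Q (g j * R ^+ j) i.
  by move=> i; rewrite [in LHS]ef qcoef_sum.
have hsum : forall i, qcoef Q f i * Q ^+ i = \sum_(j < N) qcoef Q (g j * R ^+ j) i * Q ^+ i.
  by move=> i; rewrite hcoef mulr_suml.
have ha : forall i, vle (Some mu) (nu (qcoef Q f i * Q ^+ i)).
  by move=> i; rewrite hsum; apply: (vle_sum hnu) => j _; exact: Pge.
have hb : forall i, (J < i)%N -> vlt (Some mu) (nu (qcoef Q f i * Q ^+ i)).
  move=> i Ji; rewrite hsum; apply: (vlt_sum hnu) => j _; apply: Pgt => /hJge jJ.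
  exact: leq_ltn_trans jJ Ji.
have gJ0 : g J != 0 by apply/eqP => e; move: hJ; rewrite e mul0r (nu0 hnu).
have [xJ [hxJ [hlJ [_ _ T3J]]]] := lam_info gJ0.
have emu : mu = xJ + y *+ J by move: hJ; rewrite hlJ => -[].
have hc : vlt (Some mu) (nu ((qcoef Q f J - g J) * Q ^+ J)).
  rewrite hcoef (bigD1 J) // addrAC mulrDl mulr_suml.
  apply: (nu_gt hnu); first by rewrite emu.
  apply: (vlt_sum hnu) => j /andP [_ jJ]; apply: Pgt => /hJge jJ'.
  rewrite ltn_neqAle jJ' andbT; apply: contra jJ => /eqP e; apply/eqP; exact: val_inj.
have termJ : nu (qcoef Q f J * Q ^+ J) = Some mu.
  have -> : qcoef Q f J * Q ^+ J = g J * Q ^+ J + (qcoef Q f J - g J) * Q ^+ J.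
    by rewrite -mulrDl addrC subrK.
  by rewrite (nuD_eq hL hnu) hJ.
have nuQf : nuQ nu Q f = Some mu := nuQ_char hL hnu hQ0 hsQ ha termJ.
have hd : degQ nu Q f = J := degQ_char hnu hQ0 hsQ nuQf termJ hb.
move=> d; rewrite /d hd {d}.
have hQJ := nu_expsome hnu J hy.
split.
- have := hc; rewrite -termJ !nuM // hQJ; exact: vadd_lt_cancel.
- have := termJ; rewrite -hJ !nuM // hQJ; exact: vadd_eq_cancel.
- split; first by rewrite nuQ_P // hJ nuQf.
  move=> j; have hnuQ0 : nuQ nu Q 0 = None by rewrite /nuQ size_poly0 big_ord0.
  case: (ltnP j N) => jN.
    have [e0 | gj] := eqVneq (g j) 0; first by rewrite e0 mul0r hnuQ0 nuQf.
    rewrite (nuQ_P gj) nuQf => e; exact: (hJge (Ordinal jN) e).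
  by rewrite (qcoef_big hR0 hsR jN) mul0r hnuQ0 nuQf.
- apply/bigmax_leqP => i /eqP hi; rewrite leqNgt; apply/negP => Ji.
  have hR_le := nuQ_le_term hL hnu hR0 hsR f J.
  have eJ : nu (g J * R ^+ J) = Some (xJ + rho *+ J) by rewrite nuM // hxJ (nu_expsome hnu J hr).
  rewrite eJ -hi in hR_le.
  have [e0 | gi] := eqVneq (g i) 0; first by rewrite e0 mul0r (nu0 hnu) in hR_le.
  have [xi [hxi [hli _]]] := lam_info gi.
  have lei : xJ + y *+ J <= xi + y *+ i by have := hmule i; rewrite hli -emu.
  have := arith hL yr Ji lei.
  by rewrite nuM // hxi (nu_expsome hnu i hr) /= in hR_le; rewrite ltNge' // hR_le.
Qed.

End Main.
Unset Implicit Arguments.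

Theorem mainTheorem2
  (K : fieldType) (L : porderZmodType) (hL : divisible_oag L)
  (v : K -> vinf L) (hv : is_field_valuation v)
  (nu : {poly K} -> vinf L) (hnu : is_poly_valuation nu)
  (hext : extends nu v) (hws : well_specified nu v)
  (m : nat) (hm : (1 <= m)%N)
  (hPsi_ne : exists Q, Psi nu m Q)
  (hPsi_nomax : ~ exists Q, Psi nu m Q /\
                    forall R, Psi nu m R -> vle (nu R) (nu Q))
  (Qs : {poly K} -> Prop)
  (hQs_sub : forall Q, Qs Q -> Psi nu m Q)
  (hQs_inj : forall Q R, Qs Q -> Qs R -> nu Q = nu R -> Q = R)
  (hQs_wf : forall S : {poly K} -> Prop, (forall Q, S Q -> Qs Q) ->
              (exists Q, S Q) ->
              exists Q, S Q /\ forall R, S R -> vle (nu Q) (nu R))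
  (hQs_cof : forall P, Psi nu m P -> exists Q, Qs Q /\ vle (nu P) (nu Q))
  (f Q R : {poly K}) (hf : f != 0)
  (hQ : Qs Q) (hR : Qs R) (hQR : vlt (nu Q) (nu R)) :
  let d := degQ nu Q f in
  [/\ vlt (nu (qcoef Q f d)) (nu (qcoef Q f d - qcoef R f d)),
      nu (qcoef Q f d) = nu (qcoef R f d),
      nuQ nu Q (qcoef R f d * R ^+ d) = nuQ nu Q f
        /\ (forall j : nat, nuQ nu Q (qcoef R f j * R ^+ j) = nuQ nu Q f ->
              (j <= d)%N)
    & (degQ nu R f <= d)%N].
Proof.
have [hQk sQ] := hQs_sub Q hQ.
have [hRk sR] := hQs_sub R hR.
have hsQ' : (1 < size Q)%N by rewrite sQ ltnS.
have hsR' : (1 < size R)%N by rewrite sR ltnS.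
have [y hy] := nuQ_fin hQk hsQ'.
have [rho hr] := nuQ_fin hRk hsR'.
exact: (main_conc hL hnu hm hQk hRk sQ sR hQR hy hr hf).
Qed.
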